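(* Let $\ell\in\mathbb{N}$, $h\in\bigwedge(V_{2\ell}^* )$, and let $G$ be an Eulerian graph. Then the value $s_h((G,\omega,\kappa))$ is the same for every Eulerian orientation $\omega$ of $G$ and every local ordering $\kappa$ compatible with $\omega$.
   Context: Graphs may have loops and multiple edges; a graph is Eulerian if every vertex has even degree. $V_{2\ell}=\mathbb{C}^{2\ell}$ with standard basis $e_1,\dots,e_{2\ell}$; $f_i=-e_{i+\ell}$ for $i\le\ell$, $f_i=e_{i-\ell}$ for $i>\ell$. $\bigwedge(V_{2\ell}^* )=\bigoplus_{n=0}^{2\ell}\bigwedge^n(V_{2\ell}^* )$, and $h$ applied to an $n$-fold tensor means its component $h^n\in\bigwedge^n(V_{2\ell}^* )$ (a skew-symmetric $n$-linear form) applied to it. An Eulerian orientation $\omega$ orients each edge so each vertex has equal in- and out-degree (a loop contributes one incoming and one outgoing arc). A local ordering $\kappa$ compatible with $\omega$ consists, at each vertex $v$ of degree $d(v)$, of bijections $\kappa_v^-:\delta^-(v)\to\{1,3,\dots,d(v)-1\}$ (incoming arcs) and $\kappa_v^+:\delta^+(v)\to\{2,4,\dots,d(v)\}$ (outgoing arcs); $\kappa_v^{-1}(i)$ denotes the arc at $v$ with label $i$. $\kappa$ decomposes the edge set uniquely into closed walks $(v_1,a_1,\dots,a_i,v_i,a_{i+1},\dots,v_1)$ with $\kappa^-_{v_i}(a_i)+1=\kappa^+_{v_i}(a_{i+1})$ ($\kappa$-circuits); $c(G,\kappa)$ is their number. Define $s_h((G,\omega,\kappa))=(-1)^{c(G,\kappa)}\sum_{\phi:E(G)\to[2\ell]}\prod_{v\in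 V(G)} h\big(\bigotimes_{i=1,3,\dots,d(v)-1} e_{\phi(\kappa_v^{-1}(i))}\otimes f_{\phi(\kappa_v^{-1}(i+1))}\big)$. *)

(* Defs.v *)
From HB Require Import structures.
From mathcomp Require Import all_boot all_order all_algebra.
Set Implicit Arguments. Unset Strict Implicit. Unset Printing Implicit Defensive.
Import GRing.Theory Num.Theory.

(* Half-edges are pairs (e, b) : E * bool;
   (e, false) sits at (ends e).1 and (e, true) at (ends e).2.  A loop has
   both half-edges at the same vertex, so it contributes 2 to the degree. *)
Section Graph.
Variables (V E : finType) (ends : E -> V * V).

Definition hend (x : E * bool) : V := if x.2 then (ends x.1).2 else (ends x.1).1.
Definition at_v (v : V) : {pred E * bool} := [pred x | hend x == v].
Definition deg (v : V) : nat := #|at_v v|.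
Definition eulerian_graph : Prop := forall v, ~~ odd (deg v).

(* An orientation omega : E -> bool: the half-edge (e, omega e) is the tail
   (outgoing arc at its vertex), (e, ~~ omega e) is the head (incoming). *)
Variable omega : E -> bool.
Definition outgoing (x : E * bool) : bool := x.2 == omega x.1.
Definition in_at (v : V) : {pred E * bool} := [pred x | at_v v x && ~~ outgoing x].
Definition out_at (v : V) : {pred E * bool} := [pred x | at_v v x && outgoing x].
Definition eulerian_orientation : Prop := forall v, #|out_at v| = #|in_at v|.

Variable kappa : E * bool -> nat.
Definition compatible_ordering : Prop := forall v,
  [/\ {in in_at v &, injective kappa},
      (forall i, (exists2 x, x \in in_at v & kappa x = i) <->
                 [/\ odd i, (1 <= i)%N & (i <= deg v)%N]),
      {in out_at v &, injective kappa} &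
      (forall i, (exists2 x, x \in out_at v & kappa x = i) <->
                 [/\ ~~ odd i, (1 <= i)%N & (i <= deg v)%N])].

(* kappa-circuits: after entering the head vertex w of arc e with label k,
   continue along the arc leaving w with label k+1. *)
Definition kstep (e : E) : E :=
  let w := hend (e, ~~ omega e) in
  let k := kappa (e, ~~ omega e) in
  odflt e [pick e' | (hend (e', omega e') == w) && (kappa (e', omega e') == k.+1)].
Definition ncircuits : nat := fcard kstep (mem (@predT E)).

Definition lab_edge (v : V) (k : nat) : option E :=
  omap fst [pick x | at_v v x && (kappa x == k.+1)].

Local Open Scope ring_scope.
Variables (F : fieldType) (l : nat).

(* V_{2l} = F^{2l} as row vectors indexed by 'I_(l + l) (0-based). *)
Definition ev (i : 'I_(l + l)) : 'rV[F]_(l + l) := delta_mx 0 i.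
Definition fv (i : 'I_(l + l)) : 'rV[F]_(l + l) :=
  match split i with
  | inl j => - ev (rshift l j)   (* i <= l :  f_i = - e_{i+l} *)
  | inr j => ev (lshift l j)     (* i >  l :  f_i =   e_{i-l} *)
  end.

(* An element h of the exterior algebra of V^*: for each n, its component
   h n is a skew-symmetric n-linear form on V. *)
Definition form_family := forall n : nat, {ffun 'I_n -> 'rV[F]_(l + l)} -> F.

Definition multilinear n (g : {ffun 'I_n -> 'rV[F]_(l + l)} -> F) : Prop :=
  forall (x : {ffun 'I_n -> 'rV[F]_(l + l)}) (k : 'I_n) (a : F) (u w : 'rV[F]_(l + l)),
    g [ffun j => if j == k then a *: u + w else x j]
    = a * g [ffun j => if j == k then u else x j]
      + g [ffun j => if j == k then w else x j].

Definition skew_symmetric n (g : {ffun 'I_n -> 'rV[F]_(l + l)} -> F) : Prop :=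
  forall (x : {ffun 'I_n -> 'rV[F]_(l + l)}) (i j : 'I_n), i != j ->
    g [ffun k => x (if k == i then j else if k == j then i else k)] = - g x.

Definition exterior_form (h : form_family) : Prop :=
  forall n, multilinear (h n) /\ skew_symmetric (h n).

(* tensor e_{phi(k^-1(1))} (x) f_{phi(k^-1(2))} (x) ... at vertex v *)
Definition vtensor (phi : {ffun E -> 'I_(l + l)}) (v : V) : {ffun 'I_(deg v) -> 'rV[F]_(l + l)} :=
  [ffun k : 'I_(deg v) => match lab_edge v k with
                          | Some e => if ~~ odd k then ev (phi e) else fv (phi e)
                          | None => 0
                          end : 'rV[F]_(l + l)].

Definition s_h (h : form_family) : F :=
  (-1) ^+ ncircuits *
  \sum_(phi : {ffun E -> 'I_(l + l)}) \prod_(v : V) h (deg v) (vtensor phi v).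

End Graph.

(* Main.v *)
Require Import Defs.
From HB Require Import structures.
From mathcomp Require Import all_boot all_order all_algebra.
From mathcomp Require Import all_fingroup zify.
From Stdlib Require Import FunctionalExtensionality.
Set Implicit Arguments. Unset Strict Implicit. Unset Printing Implicit Defensive.
Import GRing.Theory.

Section PermAux.
Variable E : finType.
Local Open Scope group_scope.

Definition sheetf (b : bool) (g : {perm E}) (x : E * bool) : E * bool :=
  if x.2 == b then (g x.1, x.2) else x.

Lemma sheetf_inj b g : injective (sheetf b g).
Proof.
move=> [x1 c1] [x2 c2]; rewrite /sheetf /=.
case: eqP => [->|/eqP n1]; case: eqP => [->|/eqP n2] //.
- by case=> /perm_inj -> .
- by case=> _ c; rewrite c eqxx in n2.
- by case=> _ c; rewrite -c eqxx in n1.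
Qed.

Definition sheet b g := perm (@sheetf_inj b g).

Lemma sheetM b g1 g2 : sheet b (g1 * g2) = sheet b g1 * sheet b g2.
Proof.
apply/permP => [[x c]]; rewrite permM !permE /sheetf /=.
by case: (eqVneq c b) => [->|nc]; rewrite ?eqxx ?permM // (negPf nc).
Qed.

Lemma sheet1 b : sheet b 1 = 1.
Proof. by apply/permP => [[x c]]; rewrite permE /sheetf /= !perm1; case: eqP. Qed.

Lemma sheet_tperm b x y : sheet b (tperm x y) = tperm (x, b) (y, b).
Proof.
apply/permP => [[z c]]; rewrite permE /sheetf /=.
case: eqP => [->|/eqP nc].
  case: tpermP => [->|->|nx ny]; first by rewrite tpermL.
    by rewrite tpermR.
  by rewrite tpermD //; apply/negP=> /eqP [e]; [apply: nx|apply: ny].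
rewrite tpermD //; apply/negP => /eqP [_ e]; by rewrite e eqxx in nc.
Qed.

Lemma odd_sheet b g : odd_perm (sheet b g) = odd_perm g.
Proof.
case: (prod_tpermP g) => ts -> dts.
have -> : sheet b (\prod_(t <- ts) tperm t.1 t.2)
   = \prod_(t <- [seq ((u.1, b), (u.2, b)) | u <- ts]) tperm t.1 t.2.
  elim: ts {dts} => [|t ts IH]; first by rewrite !big_nil sheet1.
  by rewrite /= !big_cons sheetM IH sheet_tperm.
rewrite !odd_perm_prod ?size_map //.
by rewrite all_map; apply: sub_all dts => [[u v]] /=; apply: contra => /eqP [->].
Qed.

Definition swpf (P : {set E}) (x : E * bool) : E * bool := (x.1, x.2 (+) (x.1 \in P)).
Lemma swpf_inj P : injective (swpf P).
Proof. by move=> [x1 c1] [x2 c2] [e]; rewrite /= e => /addIb ->. Qed.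
Definition swp P := perm (@swpf_inj P).

Lemma odd_swp P : odd_perm (swp P) = odd #|P|.
Proof.
have [n] := ubnP #|P|; elim: n P => // n IH P /ltnSE.
case: (set_0Vmem P) => [->|[a aP]] Hn.
  rewrite cards0 /=; have -> : swp set0 = 1; last by rewrite odd_perm1.
  by apply/permP => [[x c]]; rewrite permE perm1 /swpf inE addbF.
have -> : swp P = tperm (a, false) (a, true) * swp (P :\ a).
  apply/permP => [[x c]]; rewrite permM !permE /swpf /= !inE.
  case: (eqVneq x a) => [->|nxa] /=.
    by rewrite aP; case: c; rewrite /= !xpair_eqE !eqxx /= ?eqxx.
  by rewrite /= !xpair_eqE (negPf nxa) /= nxa.
rewrite odd_mul_tperm IH; last by rewrite (cardsD1 a) aP in Hn.
by rewrite (cardsD1 a P) aP /= xpair_eqE eqxx add0n.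
Qed.

Lemma porbits_fcard (s : {perm E}) : #|porbits s| = fcard s predT.
Proof.
have conP x y : (y \in porbit s x) = fconnect s x y.
  apply/porbitP/idP => [[i ->]|/iter_findex <-].
    by rewrite permX fconnect_iter.
  by exists (findex s x y); rewrite permX.
have symS : connect_sym (frel s) by apply: fconnect_sym; exact: perm_inj.
rewrite /n_comp_mem /porbits.
rewrite -(card_in_imset (f := porbit s) (D := [pred x | roots (frel s) x && predT x])).
  apply: eq_card => C; apply/imsetP/imsetP => [[x _ ->]|[r _ ->]]; last by exists r.
  exists (froot s x).
    by apply/andP; split => //; apply: roots_root; exact: symS.
  apply/setP => y; rewrite !conP; apply: (same_connect symS).
  exact: connect_root.
move=> x y /andP[/eqP rx _] /andP[/eqP ry _] exy.
have : y \in porbit s x by rewrite exy porbit_id.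
by rewrite conP -(root_connect symS) rx ry => /eqP.
Qed.

End PermAux.


Section Analytic.
Variables (V E : finType) (ends : E -> V * V).
Variables (F : fieldType) (l : nat) (h : form_family F l).
Arguments h : clear implicits.
Hypothesis hh : exterior_form h.

Local Notation H := (E * bool)%type.
Local Notation hend := (hend ends).
Local Notation at_v := (at_v ends).
Local Notation deg := (deg ends).

Definition hl (k : H -> nat) v j := [pick x | at_v v x && (k x == j)].

Local Open Scope ring_scope.

Definition Yv (om : E -> bool) (phi : {ffun E -> 'I_(l + l)}) (x : H) : 'rV[F]_(l + l) :=
  if outgoing om x then fv F (phi x.1) else ev F (phi x.1).

Definition tten k om phi v : {ffun 'I_(deg v) -> 'rV[F]_(l + l)} :=
  [ffun i : 'I_(deg v) => (if hl k v i.+1 is Some x then Yv om phi x else 0) : 'rV[F]_(l + l)].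

Definition Tt k om : F := \sum_(phi : {ffun E -> 'I_(l + l)}) \prod_(v : V) h (deg v) (tten k om phi v).

Definition valid (k : H -> nat) :=
  (forall x, 0 < k x <= deg (hend x))%N /\ (forall v, {in at_v v &, injective k}).

Lemma hl_eq k v z j : valid k -> at_v v z -> k z = j -> hl k v j = Some z.
Proof.
move=> [_ kinj] az kz; rewrite /hl; case: pickP => [y /andP[ay /eqP ky]|H0].
  by congr Some; apply: (kinj v) => //; rewrite ky kz.
by move: (H0 z); rewrite az kz eqxx.
Qed.

Lemma hl_at k v j x : hl k v j = Some x -> at_v v x /\ k x = j.
Proof. by rewrite /hl; case: pickP => // y /andP[ay /eqP ky] [<-]. Qed.

Lemma hneg n (x : {ffun 'I_n -> 'rV[F]_(l + l)}) (i : 'I_n) :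
  h n [ffun j => if j == i then - x i else x j] = - h n x.
Proof.
have [ml _] := hh n.
have z0 : h n [ffun j => if j == i then 0 else x j] = 0.
  have := ml x i 1 0 0; rewrite scale1r addr0 mul1r => /eqP.
  set a := h n _ => /eqP Ha; by apply: (addrI a); rewrite addr0 -Ha.
have := ml x i (-1) (x i) 0; rewrite addr0 scaleN1r z0 addr0 mulN1r => ->.
by congr (- h n _); apply/ffunP => j; rewrite ffunE; case: eqP => // ->.
Qed.


Lemma valid_comp k (r : H -> H) : valid k -> (forall z, hend (r z) = hend z) ->
  injective r -> valid (fun z => k (r z)).
Proof.
move=> [rng kinj] hr rinj; split => [z|v z1 z2 a1 a2 e]; first by rewrite -hr rng.
apply: rinj; apply: (kinj v) => //; by rewrite inE /= hr.
Qed.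

Lemma at_vE v z : at_v v z = (hend z == v).
Proof. by []. Qed.
Lemma at_vE' v z : (z \in at_v v) = (hend z == v).
Proof. by rewrite inE. Qed.

Lemma Tt_swap k om x y : valid k -> x != y -> hend x = hend y ->
  Tt (fun z => k (tperm x y z)) om = - Tt k om.
Proof.
move=> vk nxy hxy.
have vk' : valid (fun z => k (tperm x y z)).
  apply: valid_comp => //; last exact: perm_inj.
  by move=> z; case: tpermP => [->|->|] //.
rewrite /Tt -sumrN; apply: eq_bigr => phi _.
set v := hend x.
rewrite (bigD1 v) //= [in RHS](bigD1 v) //= -mulNr.
congr (_ * _); last first.
  apply: eq_bigr => w wv; congr (h _ _); apply/ffunP => i; rewrite !ffunE /hl.
  have -> // : [pick z | at_v w z && (k (tperm x y z) == i.+1)] =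
               [pick z | at_v w z && (k z == i.+1)].
  apply: eq_pick => z /=; rewrite !at_vE.
  have hxw : (hend x == w) = false by rewrite eq_sym; apply/negbTE.
  by case: tpermP => [->|->|//]; rewrite -?hxy hxw.
have [rng kinj] := vk.
have hx : (0 < k x <= deg v)%N := rng x.
have hy : (0 < k y <= deg v)%N by rewrite /v hxy; exact: rng y.
have ilt : ((k x).-1 < deg v)%N by lia.
have jlt : ((k y).-1 < deg v)%N by lia.
pose i := Ordinal ilt; pose j := Ordinal jlt.
have kxi : k x = i.+1 by rewrite /= prednK //; case/andP: hx.
have kyj : k y = j.+1 by rewrite /= prednK //; case/andP: hy.
have ij : i != j.
  apply/eqP => eij0; move: nxy; rewrite (kinj v x y) ?eqxx //.
  - by rewrite inE.
  - by rewrite inE /= -hxy.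
  by rewrite kxi kyj eij0.

rewrite -((hh (deg v)).2 _ i j ij); congr (h _ _); apply/ffunP => t; rewrite !ffunE.
have yv : y \in at_v v by rewrite at_vE' -hxy.
have xv : x \in at_v v by rewrite at_vE'.
case: (eqVneq t i) => [->|ti].
  rewrite (@hl_eq _ v y) //; last by rewrite /= tpermR kxi.
  by rewrite (@hl_eq k v y).
case: (eqVneq t j) => [->|tj].
  rewrite (@hl_eq _ v x) //; last by rewrite /= tpermL kyj.
  by rewrite (@hl_eq k v x).
rewrite /hl; have -> // : [pick z | at_v v z && (k (tperm x y z) == t.+1)] =
               [pick z | at_v v z && (k z == t.+1)].
apply: eq_pick => z /=.
have tj' : (k y == t.+1) = false by rewrite kyj eqSS eq_sym; apply/negbTE.
have ti' : (k x == t.+1) = false by rewrite kxi eqSS eq_sym; apply/negbTE.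
by case: tpermP => [->|->|//]; rewrite ?tj' ?ti' andbF.
Qed.

Definition sig (i : 'I_(l + l)) : 'I_(l + l) :=
  match split i with inl j => rshift l j | inr j => lshift l j end.

Lemma split_l (j : 'I_l) : split (lshift l j) = inl j.
Proof. by rewrite -[lshift l j]/(unsplit (inl j)) unsplitK. Qed.
Lemma split_r (j : 'I_l) : split (rshift l j) = inr j.
Proof. by rewrite -[rshift l j]/(unsplit (inr j)) unsplitK. Qed.

Lemma sigK : involutive sig.
Proof.
move=> i; rewrite /sig; case E0: (split i) => [j|j].
  by rewrite split_r -[lshift l j]/(unsplit (inl j)) -E0 splitK.
by rewrite split_l -[rshift l j]/(unsplit (inr j)) -E0 splitK.
Qed.

Definition isl (i : 'I_(l + l)) : bool := if split i is inl _ then true else false.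

Definition Phi (e0 : E) (phi : {ffun E -> 'I_(l + l)}) : {ffun E -> 'I_(l + l)} :=
  [ffun e => if e == e0 then sig (phi e) else phi e].

Lemma PhiK e0 : involutive (Phi e0).
Proof.
move=> phi; apply/ffunP => e; rewrite !ffunE.
by case: eqP => // ->; rewrite ?eqxx sigK.
Qed.

Lemma Yv_flip om om' e0 (phi : {ffun E -> 'I_(l + l)}) (z : H) :
  om' e0 = ~~ om e0 -> (forall e, e != e0 -> om' e = om e) ->
  let z0 := (e0, if isl (phi e0) then om e0 else ~~ om e0) in
  Yv om' (Phi e0 phi) z = if z == z0 then - Yv om phi z else Yv om phi z.
Proof.
move=> o1 o2 z0; case: z => [e b]; rewrite /Yv /outgoing /= ffunE /z0 xpair_eqE /=.
case: (eqVneq e e0) => [->|ne] /=; last by rewrite o2.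
rewrite o1 /sig /isl /fv -[phi e0]splitK.
case: (split (phi e0)) => [j|j] /=; rewrite ?split_l ?split_r;
  by case: b; case: (om e0); rewrite /= ?split_l ?split_r ?opprK.
Qed.

Lemma Tt_flip k om om' e0 : valid k ->
  om' e0 = ~~ om e0 -> (forall e, e != e0 -> om' e = om e) ->
  Tt k om' = - Tt k om.
Proof.
move=> vk o1 o2.
rewrite /Tt (reindex_inj (can_inj (PhiK e0))) -sumrN; apply: eq_bigr => phi _.
pose z0 : H := (e0, if isl (phi e0) then om e0 else ~~ om e0).
have YF z : Yv om' (Phi e0 phi) z = if z == z0 then - Yv om phi z else Yv om phi z.
  exact: Yv_flip.
set w := hend z0.
rewrite (bigD1 w) //= [in RHS](bigD1 w) //= -mulNr.
have [rng kinj] := vk.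
congr (_ * _); last first.
  apply: eq_bigr => v vw; congr (h _ _); apply/ffunP => t; rewrite !ffunE.
  case E1: (hl k v t.+1) => [x|] //; rewrite YF.
  case: eqP => // exz; move: (hl_at E1) => [] /eqP; rewrite exz -/w => ewv.
  by rewrite ewv eqxx in vw.
have hz : (0 < k z0 <= deg w)%N := rng z0.
have klt : ((k z0).-1 < deg w)%N by lia.
pose k0 := Ordinal klt.
have kz0 : k z0 = k0.+1 by rewrite /= prednK //; case/andP: hz.
rewrite -(@hneg _ _ k0); congr (h _ _); apply/ffunP => t; rewrite !ffunE.
case: (eqVneq t k0) => [->|tk].
  rewrite (@hl_eq k w z0) // ?YF ?eqxx //; by rewrite at_vE.
case E1: (hl k w t.+1) => [x|] //; rewrite YF.
case: eqP => // exz; move: (hl_at E1) => [] _; rewrite exz kz0 => /eqP.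
by move=> /eqP [] ek; move: tk; rewrite -(inj_eq val_inj) /= ek eqxx.
Qed.

Lemma Tt_perm n : forall (r : {perm H}) k om,
  (#|[set z | r z != z]| < n)%N -> valid k -> (forall z, hend (r z) = hend z) ->
  Tt (fun z => k (r z)) om = (-1) ^+ odd_perm r * Tt k om.
Proof.
elim: n => // n IH r k om.
case: (pickP (fun z => r z != z)) => [x rx|r1] cn vk hr.
  set y := r x.
  have nxy : x != y by rewrite eq_sym.
  have hxy : hend x = hend y by rewrite /y hr.
  pose r' := (r * tperm x y)%g.
  have Ek : (fun z => k (r z)) = (fun z => (fun w => k (tperm x y w)) (r' z)).
    by apply: functional_extensionality => z; rewrite permM tpermK.
  rewrite Ek (IH r' (fun w => k (tperm x y w))).
  - rewrite Tt_swap // /r' odd_permM odd_tperm nxy mulrN.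
    by case: (odd_perm r) => /=; rewrite ?expr0 ?expr1 ?mulN1r ?mul1r ?opprK.
  - rewrite -ltnS; apply: leq_trans cn; apply: proper_card; apply/properP; split.
      apply/subsetP => z; rewrite !inE /r' permM; apply: contra => /eqP rz.
      rewrite rz tpermD //; apply/eqP => ez; move: rx.
        by rewrite ez rz eqxx.
      have xz : x = z by apply: (@perm_inj _ r); rewrite rz; exact: ez.
      by rewrite xz rz eqxx.
    by exists x; rewrite !inE // /r' permM -/y tpermR eqxx.
  - apply: valid_comp => //; last exact: perm_inj.
    by move=> z; case: tpermP => [->|->|] //.
  move=> z; rewrite /r' permM -(hr z); case: tpermP => [->|->|] //; by rewrite hxy.
have -> : r = 1%g by apply/permP => z; rewrite perm1; apply/eqP; move: (r1 z); rewrite /= => /negbFE.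
rewrite odd_perm1 expr0 mul1r; congr Tt; apply: functional_extensionality => z.
by rewrite perm1.
Qed.

Lemma Tt_om n k : valid k -> forall om om',
  (#|[set e | om e != om' e]| < n)%N ->
  Tt k om' = (-1) ^+ #|[set e | om e != om' e]| * Tt k om.
Proof.
move=> vk; elim: n => // n IH om om'.
case: (pickP (fun e => om e != om' e)) => [e0 d0|d1] cn.
  pose om'' := fun e => if e == e0 then om e0 else om' e.
  have Hf : Tt k om' = - Tt k om''.
    apply: (@Tt_flip k om'' om' e0) => //.
      by rewrite /om'' eqxx; move: d0; case: (om e0); case: (om' e0).
    by move=> e /negPf ne; rewrite /om'' ne.
  have Es : [set e | om e != om'' e] = [set e | om e != om' e] :\ e0.
    apply/setP => e; rewrite !inE /om''.
    by case: (eqVneq e e0) => [->|]; rewrite ?eqxx.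
  rewrite Hf (cardsD1 e0 [set e | om e != om' e]) inE d0 in cn *.
  by rewrite (IH om om'') Es // exprS mulN1r mulNr.
have -> : om' = om.
  apply: functional_extensionality => e; move: (d1 e) => /= /negbFE /eqP; by [].
have -> : [set e | om e != om e] = set0 by apply/setP => e; rewrite !inE eqxx.
by rewrite cards0 expr0 mul1r.
Qed.

End Analytic.


Section Comb.
Variables (V E : finType) (ends : E -> V * V).
Hypothesis HG : eulerian_graph ends.

Local Notation H := (E * bool)%type.
Local Notation hend := (hend ends).
Local Notation at_v := (at_v ends).
Local Notation deg := (deg ends).

Section OneConf.
Variables (om : E -> bool) (k : H -> nat).
Hypothesis Hk : compatible_ordering ends om k.

Lemma compat_lab x :
  outgoing om x = ~~ odd (k x) /\ (0 < k x <= deg (hend x))%N.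
Proof.
have [_ P1 _ P2] := Hk (hend x).
case o: (outgoing om x).
  have : exists2 y, y \in out_at ends om (hend x) & k y = k x.
    by exists x => //; rewrite inE /= o andbT; apply/eqP.
  by move/P2 => [-> a b]; split => //; rewrite a b.
have : exists2 y, y \in in_at ends om (hend x) & k y = k x.
  by exists x => //; rewrite inE /= o andbT; apply/eqP.
by move/P1 => [-> a b]; split => //; rewrite a b.
Qed.

Lemma compat_valid : valid ends k.
Proof.
split=> [x|v]; first by case: (compat_lab x).
move=> x y ax ay kxy.
have [I1 _ I2 _] := Hk v.
have [ox _] := compat_lab x; have [oy _] := compat_lab y.
case ex: (outgoing om x); case ey: (outgoing om y).
- by apply: I2 => //; rewrite inE /= ?ex ?ey andbT.
- by move: ox oy; rewrite ex ey kxy => <-.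
- by move: ox oy; rewrite ex ey kxy => <-.
- by apply: I1 => //; rewrite inE /= ?ex ?ey andbT.
Qed.

Definition hd (e : E) : H := (e, ~~ om e).
Definition tl (e : E) : H := (e, om e).

Lemma tl_uniq e1 e2 : hend (tl e1) = hend (tl e2) -> k (tl e1) = k (tl e2) -> e1 = e2.
Proof.
move=> he ke; have [_ kinj] := compat_valid.
have := kinj (hend (tl e2)) (tl e1) (tl e2); rewrite !inE /= he eqxx => /(_ isT isT ke).
by case.
Qed.

Lemma hd_uniq e1 e2 : hend (hd e1) = hend (hd e2) -> k (hd e1) = k (hd e2) -> e1 = e2.
Proof.
move=> he ke; have [_ kinj] := compat_valid.
have := kinj (hend (hd e2)) (hd e1) (hd e2); rewrite !inE /= he eqxx => /(_ isT isT ke).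
by case.
Qed.

Lemma kstep_ex e : exists e', hend (tl e') = hend (hd e) /\ k (tl e') = (k (hd e)).+1.
Proof.
set w := hend (hd e).
have [o r] := compat_lab (hd e).
have oh : outgoing om (hd e) = false by rewrite /outgoing /=; case: (om e).
rewrite oh in o; have ev := HG w.
have lt : (k (hd e) < deg w)%N.
  rewrite ltn_neqAle; case/andP: r => _ ->; rewrite andbT.
  by apply/eqP => eq; move: ev; rewrite -eq -o.
have [_ _ _ P2] := Hk w.
have [y] : exists2 y, y \in out_at ends om w & k y = (k (hd e)).+1.
  by apply/P2; split => //=; rewrite -o.
rewrite inE /= => /andP[/eqP hy oy] ky; exists y.1.
have -> : tl y.1 = y by case: y oy {hy ky} => a b /eqP /= ->.
by [].
Qed.

Lemma kstep_spec e : hend (tl (kstep ends om k e)) = hend (hd e) /\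
   k (tl (kstep ends om k e)) = (k (hd e)).+1.
Proof.
rewrite /kstep; case: pickP => [e' /andP[/eqP a /eqP b]|nn] /=; first by [].
have [e' [a b]] := kstep_ex e.
by move: (nn e'); rewrite /= -a -b /tl !eqxx.
Qed.

Lemma kstep_uniq e e' : hend (tl e') = hend (hd e) -> k (tl e') = (k (hd e)).+1 ->
  kstep ends om k e = e'.
Proof.
have [a b] := kstep_spec e => c d; apply: tl_uniq; by rewrite ?a ?b ?c ?d.
Qed.

Lemma kstep_inj : injective (kstep ends om k).
Proof.
move=> e1 e2 eq.
have [a1 b1] := kstep_spec e1; have [a2 b2] := kstep_spec e2.
by apply: hd_uniq; [rewrite -a1 -a2 eq | apply/succn_inj; rewrite -b1 -b2 eq].
Qed.

Definition kp := perm kstep_inj.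

Lemma odd_ncirc : odd (ncircuits ends om k) = odd_perm kp (+) odd #|E|.
Proof.
rewrite /odd_perm porbits_fcard addbC addbA addbb /=.
rewrite /ncircuits; congr odd; apply: eq_fcard => x; by rewrite permE.
Qed.

Lemma sum_Tt (F : fieldType) (l : nat) (h : form_family F l) :
  (\sum_(phi : {ffun E -> 'I_(l + l)}) \prod_(v : V) h (deg v) (vtensor ends k F phi v)
  = Tt ends h k om)%R.
Proof.
rewrite /Tt; apply: eq_bigr => phi _; apply: eq_bigr => v _; congr (h _ _).
apply/ffunP => t; rewrite !ffunE.
have -> : lab_edge ends k v t = omap fst (hl ends k v t.+1) by [].
case E1: (hl ends k v t.+1) => [x|] //=.
have [_ kx] := hl_at E1; have [o _] := compat_lab x.
by rewrite /Yv o kx /=; case: (odd t).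
Qed.

End OneConf.
Section TwoConf.
Variables (om1 om2 : E -> bool) (k1 k2 : H -> nat).
Hypothesis Hk1 : compatible_ordering ends om1 k1.
Hypothesis Hk2 : compatible_ordering ends om2 k2.

Lemma rho_ex : exists r : {perm H}, (forall z, hend (r z) = hend z) /\ (forall z, k1 (r z) = k2 z).
Proof.
pose rf z := odflt z (hl ends k1 (hend z) (k2 z)).
have rfP z : hend (rf z) = hend z /\ k1 (rf z) = k2 z.
  set v := hend z.
  have [o [r1 r2]] := (compat_lab Hk2 z, compat_lab Hk2 z).
  have [_ P1 _ P2] := Hk1 v.
  have [y ay ky] : exists2 y, y \in at_v v & k1 y = k2 z.
    case od: (odd (k2 z)).
      have [y] : exists2 y, y \in in_at ends om1 v & k1 y = k2 z.
        by apply/P1; case/andP: r2 => a b; split.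
      by rewrite inE => /andP[ay _] ky; exists y.
    have [y] : exists2 y, y \in out_at ends om1 v & k1 y = k2 z.
      by apply/P2; case/andP: r2 => a b; rewrite od; split.
    by rewrite inE => /andP[ay _] ky; exists y.
  rewrite /rf (@hl_eq _ _ ends k1 v y) //=; last exact: compat_valid.
  by move: ay; rewrite inE => /eqP.
have rinj : injective rf.
  move=> z1 z2 eq; have [a1 b1] := rfP z1; have [a2 b2] := rfP z2.
  have [_ kinj] := compat_valid Hk2.
  apply: (kinj (hend z2)); rewrite ?inE -?a1 ?eq ?a2 //.
  by rewrite -b1 -b2 eq.
exists (perm rinj); split => z; rewrite permE; by case: (rfP z).
Qed.

Variable r : {perm H}.
Hypothesis hr : forall z, hend (r z) = hend z.
Hypothesis kr : forall z, k1 (r z) = k2 z.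

Lemma r_out z : outgoing om1 (r z) = outgoing om2 z.
Proof.
by have [o1 _] := compat_lab Hk1 (r z); have [o2 _] := compat_lab Hk2 z; rewrite o1 o2 kr.
Qed.

Definition g e := (r (hd om2 e)).1.
Definition g' e := (r (tl om2 e)).1.

Lemma r_hd e : r (hd om2 e) = hd om1 (g e).
Proof.
have := r_out (hd om2 e); rewrite /g /hd /outgoing /=.
case: (r (e, ~~ om2 e)) => a b /=; case: (om2 e) => /=; by case: b; case: (om1 a).
Qed.

Lemma r_tl e : r (tl om2 e) = tl om1 (g' e).
Proof.
have := r_out (tl om2 e); rewrite /g' /tl /outgoing /=.
case: (r (e, om2 e)) => a b /=; rewrite eqxx; by case: b; case: (om1 a).
Qed.

Lemma g_inj : injective g.
Proof.
move=> e1 e2 eq; have := r_hd e1; rewrite eq -r_hd => /perm_inj; by case.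
Qed.
Lemma g'_inj : injective g'.
Proof.
move=> e1 e2 eq; have := r_tl e1; rewrite eq -r_tl => /perm_inj; by case.
Qed.

Lemma kstep_rel e : kstep ends om1 k1 (g e) = g' (kstep ends om2 k2 e).
Proof.
have [a b] := kstep_spec Hk2 e.
apply: (kstep_uniq Hk1).
  by rewrite -r_tl hr a -r_hd hr.
by rewrite -r_tl kr b -r_hd kr.
Qed.

Lemma parity : odd (ncircuits ends om1 k1) (+) odd (ncircuits ends om2 k2) =
  odd_perm r (+) odd #|[set e | om1 e != om2 e]|.
Proof.
rewrite (odd_ncirc Hk1) (odd_ncirc Hk2).
pose gp := perm g_inj; pose gp' := perm g'_inj.
have e3 : (gp * kp Hk1 = kp Hk2 * gp')%g.
  by apply/permP => e; rewrite !permM !permE; exact: kstep_rel.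
have /(congr1 (@odd_perm _)) := e3; rewrite !odd_permM => E3.
pose N1 := swp [set e | ~~ om1 e]; pose N2 := swp [set e | ~~ om2 e].
have e4 : (N2 * r * N1)%g = (sheet false gp * sheet true gp')%g.
  apply/permP => [[e b]]; rewrite !permM !permE /swpf /sheetf /= !inE.
  case: b => /=.
    rewrite negbK -[(e, om2 e)]/(tl om2 e) r_tl /=.
    by rewrite permE; case: (om1 (g' e)).
  rewrite -[(e, ~~ om2 e)]/(hd om2 e) r_hd /= permE.
  by case: (om1 (g e)).
have e5 : (N2 * N1)%g = swp [set e | om1 e != om2 e].
  apply/permP => [[e b]]; rewrite !permM !permE /swpf /= !inE.
  by case: b; case: (om1 e); case: (om2 e).
have /(congr1 (@odd_perm _)) := e4; rewrite !odd_permM !odd_sheet => E4.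
have /(congr1 (@odd_perm _)) := e5; rewrite odd_permM !odd_swp => E5.
move: E3 E4 E5; rewrite !odd_swp.
case: (odd_perm (kp Hk1)); case: (odd_perm (kp Hk2)); case: (odd_perm gp);
  case: (odd_perm gp'); case: (odd_perm r); case: (odd #|E|);
  case: (odd #|[set e | ~~ om1 e]|); case: (odd #|[set e | ~~ om2 e]|);
  case: (odd #|[set e | om1 e != om2 e]|); by [].
Qed.

End TwoConf.

End Comb.

Unset Implicit Arguments.
Set Strict Implicit.

Theorem proposition1 (F : numClosedFieldType) (l : nat)
  (h : form_family F l) (hh : exterior_form h)
  (V E : finType) (ends : E -> V * V) (HG : eulerian_graph ends)
  (om1 om2 : E -> bool) (k1 k2 : E * bool -> nat)
  (Ho1 : eulerian_orientation ends om1) (Hk1 : compatible_ordering ends om1 k1)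
  (Ho2 : eulerian_orientation ends om2) (Hk2 : compatible_ordering ends om2 k2) :
  s_h ends om1 k1 h = s_h ends om2 k2 h.
Proof.
rewrite /s_h (sum_Tt Hk1) (sum_Tt Hk2).
have [r [hr kr]] := rho_ex Hk1 Hk2.
have vk1 := compat_valid Hk1.
have T2 : Tt ends h k2 om2 = ((-1) ^+ odd_perm r * ((-1) ^+ #|[set e | om1 e != om2 e]| * Tt ends h k1 om1))%R.
  have -> : k2 = (fun z => k1 (r z)) by apply: functional_extensionality => z; rewrite kr.
  rewrite (@Tt_perm _ _ _ _ _ h hh (#|[set z | r z != z]|).+1) //.
  by rewrite (@Tt_om _ _ _ _ _ h hh (#|[set e | om1 e != om2 e]|).+1 k1 vk1 om1 om2).
rewrite T2 !GRing.mulrA -(signr_odd _ (ncircuits _ _ _)) -(signr_odd _ (ncircuits _ om2 _)).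
rewrite -(signr_odd _ #|_|) -!signr_addb; congr (_ ^+ _ * _)%R.
have := parity HG Hk1 Hk2 hr kr.
by case: (odd (ncircuits _ om1 _)); case: (odd (ncircuits _ om2 _)); case: (odd_perm r); case: (odd _).
Qed.
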